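(* Let $n\ge1$, $H\in\mathbb{R}^{n\times n}$ symmetric positive semidefinite, $h\in\mathbb{R}^n$ with $h\neq0$, $\lambda=\frac{1}{4\sqrt2\|h\|_2}$, and $\epsilon>0$. Let $(z^k,v^k,s^k)_{k\ge0}$ be generated by the predictor–corrector algorithm described in the context, initialized with $z^0=0$, $\gamma^0=\mathbf{1}_n-\lambda h$, $\theta^0=\mathbf{1}_n+\lambda h$, $\phi^0=\psi^0=\mathbf{1}_n$ (so $v^0=(\gamma^0,\theta^0)$, $s^0=(\phi^0,\psi^0)$). Then for every $k$, \[ \mu^{k+1}\le\Big(1-\frac{0.2348}{\sqrt{2n}}\Big)^2\mu^k , \] and the algorithm (which stops at the first $k$ with $(v^k)^\top s^k\le\epsilon$) requires at most \[ N_{\max}=\left\lceil\frac{\log\big(\frac{2n}{\epsilon}\big)}{-2\log\big(1-\frac{0.2348}{\sqrt{2n}}\big)}\right\rceil \] iterations, i.e. $(v^k)^\top s^k\le\epsilon$ holds for all $k\ge N_{\max}$.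
   Context: Box-QP: $\min_{z}\frac12 z^\top Hz+z^\top h$ s.t. $-\mathbf{1}_n\le z\le\mathbf{1}_n$, with objective scaled by $2\lambda$ (which does not change the minimizer). Variables: $z\in\mathbb{R}^n$, $v=(\gamma,\theta)\in\mathbb{R}^{2n}$, $s=(\phi,\psi)\in\mathbb{R}^{2n}$. With $\Omega=[I_n,-I_n]$, the Newton system at $(z,v,s)$ with parameters $\sigma,\mu$ is $(2\lambda H)\Delta z+\Omega\Delta v=0$, $\Omega^\top\Delta z+\Delta s=0$, $s\odot\Delta v+v\odot\Delta s=\sigma\mu\mathbf{1}_{2n}-v\odot s$. Algorithm, iteration $k$: set $\mu^k=\frac{(v^k)^\top s^k}{2n}$; let $(\Delta z_p,\Delta v_p,\Delta s_p)$ solve the Newton system at $(z^k,v^k,s^k)$ with $\sigma=0$, $\mu=\mu^k$; $\Delta\mu_p=\frac{\Delta v_p^\top\Delta s_p}{2n}$; $\alpha^k=\min\big(\frac12,\sqrt{\mu^k/(8\|\Delta v_p\odot\Delta s_p-\Delta\mu_p\mathbf{1}_{2n}\|)}\big)$ (square-root term read as $+\infty$ if the norm is $0$); $(\hat z^k,\hat v^k,\hat s^k)=(z^k,v^k,s^k)+\alpha^k(\Delta z_p,\Delta v_p,\Delta s_p)$; $\hat\mu^k=\frac{(\hat v^k)^\top\hat s^k}{2n}$; let $(\Delta z_c,\Delta v_c,\Delta s_c)$ solve the Newton system at $(\hat z^k,\hat v^k,\hat s^k)$ with $\sigma=1$, $\mu=\hat\mu^k$; $(z^{k+1},v^{k+1},s^{k+1})=(\hat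 z^k,\hat v^k,\hat s^k)+(\Delta z_c,\Delta v_c,\Delta s_c)$. $\odot$ is the Hadamard product, $\mathbf{1}_m$ the all-ones vector, $\|\cdot\|$ the Euclidean norm. *)

(* Defs.v *)
From HB Require Import structures.
From mathcomp Require Import all_boot all_order all_algebra.
From mathcomp Require Import all_classical all_reals all_analysis.
Set Implicit Arguments. Unset Strict Implicit. Unset Printing Implicit Defensive.
Import Order.TTheory GRing.Theory Num.Theory.
Local Open Scope ring_scope.

Section Defs.
Variable R : realType.

Definition hadam m (a b : 'cV[R]_m) : 'cV[R]_m := \col_i (a i 0 * b i 0).
Definition dotv m (a b : 'cV[R]_m) : R := \sum_i a i 0 * b i 0.
Definition norm2 m (a : 'cV[R]_m) : R := Num.sqrt (dotv a a).
Definition ones m : 'cV[R]_m := const_mx 1.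

Definition Omega n : 'M[R]_(n, n + n) := row_mx 1%:M (- 1%:M).

Definition mu_of n (v s : 'cV[R]_(n + n)) : R := dotv v s / (2 * n)%:R.

Definition newton_sol n (lam : R) (H : 'M[R]_n)
  (v s : 'cV[R]_(n + n)) (sigma mu : R)
  (dz : 'cV[R]_n) (dv ds : 'cV[R]_(n + n)) : Prop :=
  [/\ ((2 * lam) *: H) *m dz + Omega n *m dv = 0,
      (Omega n)^T *m dz + ds = 0 &
      hadam s dv + hadam v ds = (sigma * mu) *: ones (n + n) - hadam v s].

(* alpha^k = min(1/2, sqrt(mu/(8 nrm))), square-root term = +oo when nrm = 0 *)
Definition alpha_of (mu nrm : R) : R :=
  if nrm == 0 then 1 / 2 else Num.min (1 / 2) (Num.sqrt (mu / (8 * nrm))).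

Definition pc_step n (lam : R) (H : 'M[R]_n)
  (z : 'cV[R]_n) (v s : 'cV[R]_(n + n))
  (z' : 'cV[R]_n) (v' s' : 'cV[R]_(n + n)) : Prop :=
  exists (dzp : 'cV[R]_n) (dvp dsp : 'cV[R]_(n + n))
         (dzc : 'cV[R]_n) (dvc dsc : 'cV[R]_(n + n)),
    let mu := mu_of v s in
    newton_sol lam H v s 0 mu dzp dvp dsp /\
    let dmu := dotv dvp dsp / (2 * n)%:R in
    let alpha := alpha_of mu
        (norm2 (hadam dvp dsp - dmu *: ones (n + n))) in
    let zh := z + alpha *: dzp in
    let vh := v + alpha *: dvp in
    let sh := s + alpha *: dsp in
    newton_sol lam H vh sh 1 (mu_of vh sh) dzc dvc dsc /\
    [/\ z' = zh + dzc, v' = vh + dvc & s' = sh + dsc].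

End Defs.

(* Main.v *)
Require Import Defs.
From HB Require Import structures.
From mathcomp Require Import all_boot all_order all_algebra.
From mathcomp Require Import all_classical all_reals all_analysis.
From mathcomp Require Import ring lra.
Import Order.TTheory GRing.Theory Num.Theory.
Set Implicit Arguments. Unset Strict Implicit. Unset Printing Implicit Defensive.
Local Open Scope ring_scope.

Section Scalar.
Variable R : realType.

Lemma term_le_sum m (f : 'I_m -> R) i : (forall j, 0 <= f j) -> f i <= \sum_j f j.
Proof. move=> f0; rewrite (bigD1 i) //= lerDl sumr_ge0 // => j _; exact: f0. Qed.

Lemma sumsq_le_sqsum m (x : 'I_m -> R) : (forall i, 0 <= x i) ->
  \sum_i x i ^+ 2 <= (\sum_i x i) ^+ 2.
Proof.
move=> x0; rewrite [X in _ <= X]expr2 mulr_suml; apply: ler_sum => i _.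
rewrite expr2; apply: ler_wpM2l => //; exact: term_le_sum.
Qed.

Lemma sumsq_bound m (p e : 'I_m -> R) :
  (forall i, p i <= e i) -> (forall i, 0 <= e i) -> 0 <= \sum_i p i ->
  \sum_i p i ^+ 2 <= 2 * (\sum_i e i) ^+ 2.
Proof.
move=> pe e0 p0.
have r0 i : 0 <= e i - p i by rewrite subr_ge0.
apply: (@le_trans _ _ (\sum_i (e i ^+ 2 + (e i - p i) ^+ 2))).
  apply: ler_sum => i _. have := e0 i; have := r0 i. nra.
rewrite big_split /=.
have h1 := sumsq_le_sqsum e0.
have h2 := sumsq_le_sqsum r0.
have h3 : \sum_i (e i - p i) = \sum_i e i - \sum_i p i by rewrite sumrB.
have h4 : 0 <= \sum_i (e i - p i) by apply: sumr_ge0 => i _; exact: r0.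
rewrite h3 in h2 h4.
nra.
Qed.

Lemma zero_of_sumsq m (x : 'I_m -> R) i : \sum_j x j ^+ 2 <= 0 -> x i = 0.
Proof.
move=> h; apply/eqP; rewrite -sqrf_eq0 eq_le sqr_ge0 andbT.
apply: le_trans _ h; apply: (@term_le_sum _ (fun j => x j ^+ 2)) => j; exact: sqr_ge0.
Qed.

Lemma cs_le m (x y : 'I_m -> R) X Y : 0 <= X -> 0 <= Y ->
  \sum_i x i ^+ 2 <= X ^+ 2 -> \sum_i y i ^+ 2 <= Y ^+ 2 ->
  \sum_i x i * y i <= X * Y.
Proof.
move=> X0 Y0 hx hy.
have [Xe|Xn] := eqVneq X 0.
  rewrite Xe mul0r big1 // => i _; rewrite (@zero_of_sumsq _ x i) ?mul0r //.
  by move: hx; rewrite Xe expr2 mulr0.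
have [Ye|Yn] := eqVneq Y 0.
  rewrite Ye mulr0 big1 // => i _; rewrite (@zero_of_sumsq _ y i) ?mulr0 //.
  by move: hy; rewrite Ye expr2 mulr0.
have Xp : 0 < X by rewrite lt_neqAle eq_sym Xn.
have Yp : 0 < Y by rewrite lt_neqAle eq_sym Yn.
have : \sum_i (2 * X * Y) * (x i * y i) <= \sum_i (Y ^+ 2 * x i ^+ 2 + X ^+ 2 * y i ^+ 2).
  apply: ler_sum => i _; have := sqr_ge0 (Y * x i - X * y i); nra.
rewrite -mulr_sumr big_split /= -!mulr_sumr => h.
have hXY : 0 < X * Y by apply: mulr_gt0.
nra.
Qed.

Lemma mink m (x y : 'I_m -> R) X Y : 0 <= X -> 0 <= Y ->
  \sum_i x i ^+ 2 <= X ^+ 2 -> \sum_i y i ^+ 2 <= Y ^+ 2 ->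
  \sum_i (x i + y i) ^+ 2 <= (X + Y) ^+ 2.
Proof.
move=> X0 Y0 hx hy.
have hc := cs_le X0 Y0 hx hy.
have -> : \sum_i (x i + y i) ^+ 2 =
   \sum_i x i ^+ 2 + 2 * \sum_i x i * y i + \sum_i y i ^+ 2.
  by rewrite mulr_sumr -!big_split /=; apply: eq_bigr => i _; ring.
nra.
Qed.

Lemma centered m (p : 'I_m -> R) : (0 < m)%N ->
  \sum_i (p i - (\sum_j p j) / m%:R) ^+ 2 <= \sum_i p i ^+ 2.
Proof.
move=> hm; set c := (\sum_j p j) / m%:R.
have M0 : 0 < m%:R :> R by rewrite ltr0n.
have hs : \sum_j p j = c * m%:R by rewrite /c mulfVK // gt_eqF.
rewrite (eq_bigr (fun i => p i ^+ 2 + ((- (2 * c)) * p i + c ^+ 2))); last by move=> i _; ring.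
rewrite big_split big_split /= -mulr_sumr sumr_const card_ord -mulr_natr hs.
nra.
Qed.

Lemma pos_line (v s a b : R) : 0 < v -> 0 < s ->
  (forall t, 0 <= t <= 1 -> 0 < (v + t * a) * (s + t * b)) -> 0 < v + a /\ 0 < s + b.
Proof.
move=> v0 s0 h; split; rewrite ltNge; apply/negP => H.
- have a0 : a < 0 by lra.
  have := h (v / (- a)).
  have -> : v + v / (- a) * a = 0 by field; lra.
  rewrite mul0r ltxx => hf; suff: false by []; apply: hf.
  rewrite divr_ge0 /= ?ler_pdivrMr; lra.
- have a0 : b < 0 by lra.
  have := h (s / (- b)).
  have -> : s + s / (- b) * b = 0 by field; lra.
  rewrite mulr0 ltxx => hf; suff: false by []; apply: hf.
  rewrite divr_ge0 /= ?ler_pdivrMr; lra.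
Qed.


Lemma sq_le (x y : R) : 0 <= y -> x ^+ 2 <= y ^+ 2 -> x <= y.
Proof.
move=> y0 h; have [x0|x0] := lerP x 0; first lra.
by rewrite -ler_sqr ?nnegrE // ltW.
Qed.

Lemma sq_mono (x y : R) : 0 <= x -> x <= y -> x ^+ 2 <= y ^+ 2.
Proof. by move=> x0 h; rewrite ler_sqr ?nnegrE //; apply: le_trans h. Qed.

Lemma alpha_facts (mu S M : R) : 0 < mu -> 2 <= M -> 0 <= S ->
  S <= M ^+ 2 * mu ^+ 2 / 8 ->
  let al := alpha_of mu (Num.sqrt S) in
  [/\ 0 < al, al <= 1/2, al ^+ 2 * Num.sqrt S <= mu / 8 & 7/20 <= al ^+ 2 * M].
Proof.
move=> mu0 M2 S0 hS al.
have T0 : 0 <= Num.sqrt S by apply: sqrtr_ge0.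
have TS : Num.sqrt S ^+ 2 = S by rewrite sqr_sqrtr.
rewrite /al /alpha_of; case: eqP => [Te|Tn].
  rewrite Te; split; lra.
have Tp : 0 < Num.sqrt S by rewrite lt_neqAle eq_sym T0 andbT; apply/eqP.
set T := Num.sqrt S in T0 TS Tn Tp *.
have K0 : 0 <= mu / (8 * T) by apply: divr_ge0; lra.
have rK : Num.sqrt (mu / (8 * T)) ^+ 2 = mu / (8 * T) by rewrite sqr_sqrtr.
have r0 : 0 < Num.sqrt (mu / (8 * T)).
  by rewrite sqrtr_gt0; apply: divr_gt0; lra.
set r := Num.sqrt (mu / (8 * T)) in rK r0 *.
have rT : r ^+ 2 * T = mu / 8 by rewrite rK; field; lra.
have [hr|hr] := lerP (1/2) r.
  split; try lra.
  have h1 : (1/2) ^+ 2 <= r ^+ 2 by rewrite !expr2; nra.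
  have := ler_wpM2r T0 h1; lra.
split => //; try lra.
have hT : T <= 5/14 * (M * mu).
  apply: sq_le; first by apply: mulr_ge0; [lra| apply: mulr_ge0; lra].
  rewrite TS !exprMn; lra.
rewrite rK; rewrite mulrAC ler_pdivlMr; nra.
Qed.

Lemma line_id (v s dv ds t c : R) : s * dv + v * ds = c - v * s ->
  (v + t * dv) * (s + t * ds) = (1 - t) * (v * s) + t * c + t ^+ 2 * (dv * ds).
Proof.
move=> e; have := congr1 (fun x => t * x) e => /= e'.
rewrite expr2; nra.
Qed.

Lemma sum_line m (v s dv ds : 'I_m -> R) t c :
  (forall i, s i * dv i + v i * ds i = c - v i * s i) ->
  \sum_i (v i + t * dv i) * (s i + t * ds i) =
  (1 - t) * \sum_i v i * s i + (t * c) * m%:R + t ^+ 2 * \sum_i dv i * ds i.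
Proof.
move=> e.
rewrite (eq_bigr (fun i => (1 - t) * (v i * s i) + t * c + t ^+ 2 * (dv i * ds i))); last first.
  by move=> i _; apply: line_id.
rewrite !big_split /= -!mulr_sumr sumr_const card_ord -mulr_natr; ring.
Qed.


Lemma sum_pos m (f : 'I_m -> R) : (0 < m)%N -> (forall i, 0 < f i) -> 0 < \sum_i f i.
Proof.
move=> hm fp; apply: (@lt_le_trans _ _ (f (Ordinal hm))) => //.
by apply: term_le_sum => j; apply: ltW.
Qed.

Lemma predictor m (v s dv ds : 'I_m -> R) (mu dmu al : R) :
  (1 < m)%N ->
  (forall i, 0 < v i /\ 0 < s i) ->
  mu = (\sum_i v i * s i) / m%:R ->
  \sum_i (v i * s i - mu) ^+ 2 <= (mu / 4) ^+ 2 ->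
  (forall i, s i * dv i + v i * ds i = 0 - v i * s i) ->
  0 <= \sum_i dv i * ds i ->
  dmu = (\sum_i dv i * ds i) / m%:R ->
  al = alpha_of mu (Num.sqrt (\sum_i (dv i * ds i - dmu) ^+ 2)) ->
  let muh := (\sum_i (v i + al * dv i) * (s i + al * ds i)) / m%:R in
  [/\ forall i, 0 < v i + al * dv i /\ 0 < s i + al * ds i,
      \sum_i ((v i + al * dv i) * (s i + al * ds i) - muh) ^+ 2 <= (muh / 2) ^+ 2,
      muh <= (1 - al + al ^+ 2 / 4) * mu,
      0 < al /\ al <= 1/2 &
      7/20 <= al ^+ 2 * m%:R].
Proof.
move=> hm pos hmu nb newt mono hdmu hal muh.
have hm0 : (0 < m)%N by apply: ltn_trans hm.
set M : R := m%:R in hmu hdmu muh *.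
have M0 : 0 < M by rewrite ltr0n.
have M2 : 2 <= M by rewrite (ler_nat R 2 m).
have wpos i : 0 < v i * s i by case: (pos i) => ? ?; apply: mulr_gt0.
have sw0 : 0 < \sum_i v i * s i by apply: sum_pos.
have mu0 : 0 < mu by rewrite hmu divr_gt0.
have hsw : \sum_i v i * s i = mu * M by rewrite hmu mulfVK // gt_eqF.
have hsp : \sum_i dv i * ds i = dmu * M by rewrite hdmu mulfVK // gt_eqF.
have pe i : dv i * ds i <= v i * s i / 4.
  have := sqr_ge0 (s i * dv i - v i * ds i); have := newt i; have := wpos i.
  move=> w0 e h.
  have h4 : 4 * (v i * s i) * (dv i * ds i) <= (v i * s i) ^+ 2.
    have -> : (v i * s i) ^+ 2 = (s i * dv i + v i * ds i) ^+ 2 by rewrite e sub0r sqrrN.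
    nra.
  rewrite ler_pdivlMr //; nra.
have hp2 : \sum_i (dv i * ds i) ^+ 2 <= M ^+ 2 * mu ^+ 2 / 8.
  have := sumsq_bound pe (fun i => ltW (divr_gt0 (wpos i) (ltr0n _ 4))) mono.
  by rewrite -mulr_suml hsw; lra.
have hpl : \sum_i dv i * ds i <= mu * M / 4.
  by rewrite -hsw mulr_suml; apply: ler_sum => i _; apply: pe.
have dmu0 : 0 <= dmu by rewrite hdmu divr_ge0 // ltW.
have dmu4 : dmu <= mu / 4.
  by rewrite hdmu ler_pdivrMr //; lra.
set S := \sum_i (dv i * ds i - dmu) ^+ 2 in hal.
have S0 : 0 <= S by apply: sumr_ge0 => i _; apply: sqr_ge0.
have hSp : S <= \sum_i (dv i * ds i) ^+ 2.
  by rewrite /S hdmu; apply: centered.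
have [al0 al2 alT alM] := alpha_facts mu0 M2 S0 (le_trans hSp hp2).
rewrite -hal in al0 al2 alT alM.
set T := Num.sqrt S in hal alT.
have T0 : 0 <= T by apply: sqrtr_ge0.
have TS : T ^+ 2 = S by rewrite sqr_sqrtr.
have line t : 0 <= t <= al ->
  let mut := (1 - t) * mu + t ^+ 2 * dmu in
  \sum_i ((v i + t * dv i) * (s i + t * ds i) - mut) ^+ 2 <= (mut / 2) ^+ 2
  /\ \sum_i (v i + t * dv i) * (s i + t * ds i) = mut * M.
  move=> /andP [t0 ta] mut; split; last first.
    by rewrite (sum_line t newt) hsw hsp /mut; ring.
  rewrite (eq_bigr (fun i => ((1 - t) * (v i * s i - mu) + t ^+ 2 * (dv i * ds i - dmu)) ^+ 2)); last first.
    by move=> i _; rewrite (line_id _ (newt i)) /mut; congr (_ ^+ 2); ring.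
  have X0 : 0 <= (1 - t) * mu / 4 by apply: divr_ge0 => //; apply: mulr_ge0; lra.
  have Y0 : 0 <= t ^+ 2 * T by apply: mulr_ge0 => //; apply: sqr_ge0.
  apply: le_trans (mink X0 Y0 _ _) _.
  - under eq_bigr do rewrite exprMn.
    rewrite -mulr_sumr.
    have -> : ((1 - t) * mu / 4) ^+ 2 = (1 - t) ^+ 2 * (mu / 4) ^+ 2 by rewrite -mulrA exprMn.
    by apply: ler_wpM2l => //; apply: sqr_ge0.
  - under eq_bigr do rewrite exprMn.
    by rewrite -mulr_sumr -/S -TS le_eqVlt; apply/orP; left; apply/eqP; ring.
  have tt : t ^+ 2 * T <= al ^+ 2 * T.
    by apply: ler_wpM2r => //; apply: sq_mono.
  have td : 0 <= t ^+ 2 * dmu by apply: mulr_ge0 => //; apply: sqr_ge0.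
  apply: sq_mono; first lra.
  rewrite /mut; nra.
have hal' : 0 <= al <= al by rewrite lexx andbT ltW.
have [nb_al sum_al] := line al hal'.
have muh_eq : muh = (1 - al) * mu + al ^+ 2 * dmu by rewrite /muh sum_al mulfK // gt_eqF.
have ad0 : 0 <= al ^+ 2 * dmu by apply: mulr_ge0 => //; apply: sqr_ge0.
split => //.
- move=> i; case: (pos i) => vi si; apply: pos_line => // t' /andP [t0 t1].
  rewrite !mulrA.
  have ht : 0 <= t' * al <= al by apply/andP; split; [apply: mulr_ge0; lra | nra].
  have [nbt _] := line _ ht.
  set t := t' * al in nbt ht *.
  have td : 0 <= t ^+ 2 * dmu by apply: mulr_ge0 => //; apply: sqr_ge0.
  have mut0 : 0 < (1 - t) * mu + t ^+ 2 * dmu by nra.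
  set mut := (1 - t) * mu + t ^+ 2 * dmu in nbt mut0.
  have comp := le_trans (@term_le_sum _ (fun j => ((v j + t * dv j) * (s j + t * ds j) - mut) ^+ 2) i (fun j => sqr_ge0 _)) nbt.
  simpl in comp; nra.
- by rewrite muh_eq.
- rewrite muh_eq.
  have := ler_wpM2l (sqr_ge0 al) dmu4; nra.
Qed.


Lemma corrector m (v s dv ds : 'I_m -> R) (mu : R) :
  (0 < m)%N ->
  (forall i, 0 < v i /\ 0 < s i) ->
  mu = (\sum_i v i * s i) / m%:R ->
  \sum_i (v i * s i - mu) ^+ 2 <= (mu / 2) ^+ 2 ->
  (forall i, s i * dv i + v i * ds i = 1 * mu - v i * s i) ->
  0 <= \sum_i dv i * ds i ->
  let mun := (\sum_i (v i + dv i) * (s i + ds i)) / m%:R in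
  [/\ forall i, 0 < v i + dv i /\ 0 < s i + ds i,
      \sum_i ((v i + dv i) * (s i + ds i) - mun) ^+ 2 <= (mun / 4) ^+ 2 &
      mun <= (1 + 1 / (8 * m%:R)) * mu].
Proof.
move=> hm pos hmu nb newt mono mun.
set M : R := m%:R in hmu mun *.
have M0 : 0 < M by rewrite ltr0n.
have wpos i : 0 < v i * s i by case: (pos i) => ? ?; apply: mulr_gt0.
have sw0 : 0 < \sum_i v i * s i by apply: sum_pos.
have mu0 : 0 < mu by rewrite hmu divr_gt0.
have hsw : \sum_i v i * s i = mu * M by rewrite hmu mulfVK // gt_eqF.
have wge i : mu / 2 <= v i * s i.
  have := le_trans (@term_le_sum _ (fun j => (v j * s j - mu) ^+ 2) i (fun j => sqr_ge0 _)) nb.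
  simpl; nra.
have pe i : dv i * ds i <= (v i * s i - mu) ^+ 2 / (2 * mu).
  have := sqr_ge0 (s i * dv i - v i * ds i); have := newt i; have := wpos i; have := wge i.
  move=> wg w0 e h.
  have h4 : 4 * (v i * s i) * (dv i * ds i) <= (v i * s i - mu) ^+ 2.
    have -> : (v i * s i - mu) ^+ 2 = (s i * dv i + v i * ds i) ^+ 2 by rewrite e mul1r -sqrrN opprB.
    nra.
  rewrite ler_pdivlMr; last lra.
  have [p0|p0] := lerP 0 (dv i * ds i).
    have h0 : 0 <= v i * s i - mu / 2 by rewrite subr_ge0.
    have := mulr_ge0 h0 p0; nra.
  have := sqr_ge0 (v i * s i - mu); nra.
have e0 i : 0 <= (v i * s i - mu) ^+ 2 / (2 * mu) by apply: divr_ge0; [apply: sqr_ge0 | lra].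
have se : \sum_i (v i * s i - mu) ^+ 2 / (2 * mu) <= mu / 8.
  rewrite -mulr_suml ler_pdivrMr; last lra.
  have -> : mu / 8 * (2 * mu) = (mu / 2) ^+ 2 by rewrite expr2; field.
  exact: nb.
have se0 : 0 <= \sum_i (v i * s i - mu) ^+ 2 / (2 * mu) by apply: sumr_ge0 => i _.
have hp2 : \sum_i (dv i * ds i) ^+ 2 <= mu ^+ 2 / 32.
  apply: le_trans (sumsq_bound pe e0 mono) _.
  have := sq_mono se0 se; rewrite expr2; nra.
have hpl : \sum_i dv i * ds i <= mu / 8.
  by apply: le_trans se; apply: ler_sum => i _; apply: pe.
have sn : \sum_i (v i + dv i) * (s i + ds i) = mu * M + \sum_i dv i * ds i.
  rewrite (eq_bigr (fun i => (v i + 1 * dv i) * (s i + 1 * ds i))); last by move=> i _; rewrite !mul1r.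
  rewrite (sum_line 1 newt) /M; ring.
have mun_eq : mun = mu + (\sum_i dv i * ds i) / M.
  by rewrite /mun sn mulrDl mulfK // gt_eqF.
have dm0 : 0 <= (\sum_i dv i * ds i) / M by apply: divr_ge0 => //; apply: ltW.
split.
- move=> i; case: (pos i) => vi si; apply: pos_line => // t /andP [t0 t1].
  rewrite (line_id _ (newt i)) mul1r.
  have pi2 : (dv i * ds i) ^+ 2 <= mu ^+ 2 / 32.
    apply: le_trans hp2.
    exact: (@term_le_sum _ (fun j => (dv j * ds j) ^+ 2) i (fun j => sqr_ge0 _)).
  have pl : - (mu / 4) < dv i * ds i by nra.
  have := wge i.
  have tt : t ^+ 2 <= t by rewrite expr2; nra.
  nra.
- rewrite (eq_bigr (fun i => (dv i * ds i - (\sum_j dv j * ds j) / M) ^+ 2)); last first.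
    move=> i _; congr (_ ^+ 2); rewrite mun_eq.
    have := line_id 1 (newt i); rewrite !mul1r subrr mul0r add0r expr1n mul1r => ->.
    ring.
  apply: le_trans (centered _ hm) _.
  apply: le_trans hp2 _.
  rewrite mun_eq; nra.
- rewrite mun_eq.
  have : (\sum_i dv i * ds i) / M <= mu / 8 / M by rewrite ler_pM2r // invr_gt0.
  have -> : mu / 8 / M = 1 / (8 * M) * mu by field; lra.
  lra.
Qed.


Lemma poly_ineq (u : R) : 0 < u -> u <= 5/7 ->
  (1 + u ^+ 2 / 8) * (1 - 59/200 * u) ^+ 2 <= (1 - 2348/10000 * u) ^+ 2.
Proof.
move=> u0 u1.
have h1 : 0 <= u * (12/100 - 157/1000 * u) by apply: mulr_ge0; lra.
have h2 : 0 <= (u * u * u) * (7/100 - 11/1000 * u).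
  by apply: mulr_ge0; [apply: mulr_ge0; [apply: mulr_ge0|]; lra | lra].
have h3 : 0 <= u * u by apply: mulr_ge0; lra.
have h4 : 0 <= u * u * u by apply: mulr_ge0; lra.
have h5 : 0 <= u * u * u * u by apply: mulr_ge0; lra.
rewrite !expr2.
lra.
Qed.

Lemma final_arith (M al mu : R) : 2 <= M -> 0 < al -> al <= 1/2 ->
  7/20 <= al ^+ 2 * M -> 0 < mu ->
  (1 + 1 / (8 * M)) * ((1 - al + al ^+ 2 / 4) * mu) <=
  (1 - 2348 / 10000 / Num.sqrt M) ^+ 2 * mu.
Proof.
move=> M2 al0 al2 alM mu0.
have M0 : 0 <= M by lra.
have qq : Num.sqrt M ^+ 2 = M by rewrite sqr_sqrtr.
have q0 : 0 <= Num.sqrt M by apply: sqrtr_ge0.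
set q := Num.sqrt M in qq q0 *.
have q75 : 7/5 <= q by apply: sq_le => //; rewrite qq; lra.
have qn : q != 0 by apply/eqP; lra.
set u := q^-1.
have u0 : 0 < u by rewrite invr_gt0; lra.
have uq : u * q = 1 by rewrite mulVf.
have u57 : u <= 5/7.
  have : 0 <= u * (q - 7/5) by apply: mulr_ge0; lra.
  rewrite mulrBr uq; lra.
have hb : 59/100 <= al * q.
  apply: sq_le; first by apply: mulr_ge0; lra.
  by rewrite [X in _ <= X]exprMn qq; lra.
have hal : 59/100 * u <= al.
  have -> : al = (al * q) * u by rewrite -mulrA [q * u]mulrC uq mulr1.
  apply: ler_wpM2r; lra.
rewrite mulrA; apply: ler_wpM2r; first lra.
have -> : 1 / (8 * M) = u ^+ 2 / 8 by rewrite -qq /u; field.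
apply: le_trans (poly_ineq u0 u57).
have u2 : 0 <= u ^+ 2 / 8 by apply: divr_ge0 => //; apply: sqr_ge0.
apply: ler_wpM2l; first lra.
have -> : 1 - al + al ^+ 2 / 4 = (1 - al / 2) ^+ 2 by rewrite !expr2; field.
apply: sq_mono; lra.
Qed.

End Scalar.

Section Vec.
Variable R : realType.

Lemma newton_comp n (lam : R) (H : 'M[R]_n) (v s : 'cV[R]_(n + n)) sig mu dz dv ds :
  newton_sol lam H v s sig mu dz dv ds ->
  forall i, s i 0 * dv i 0 + v i 0 * ds i 0 = sig * mu - v i 0 * s i 0.
Proof.
move=> [_ _ /matrixP e3] i; move: (e3 i 0).
by rewrite !mxE mulr1.
Qed.

Lemma dotvE m (a b : 'cV[R]_m) : dotv a b = (a^T *m b) 0 0.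
Proof. by rewrite /dotv !mxE; apply: eq_bigr => i _; rewrite !mxE. Qed.

Lemma newton_mono n (lam : R) (H : 'M[R]_n) (v s : 'cV[R]_(n + n)) sig mu dz dv ds :
  0 <= lam -> H^T = H -> (forall x : 'cV[R]_n, 0 <= (x^T *m H *m x) 0 0) ->
  newton_sol lam H v s sig mu dz dv ds -> 0 <= \sum_i dv i 0 * ds i 0.
Proof.
move=> l0 sH psd [e1 e2 _].
have eds : ds = - ((Omega R n)^T *m dz) by apply/eqP; rewrite -addr_eq0 addrC e2.
have edv : Omega R n *m dv = - (((2 * lam) *: H) *m dz) by apply/eqP; rewrite -addr_eq0 addrC e1.
have -> : \sum_i dv i 0 * ds i 0 = dotv dv ds by [].
rewrite dotvE eds mulmxN mulmxA -trmx_mul edv.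
rewrite linearN /= mulNmx opprK trmx_mul linearZ /= sH -scalemxAr -scalemxAl mxE.
by apply: mulr_ge0; [lra | apply: psd].
Qed.


Definition nbhdPC n (v s : 'cV[R]_(n + n)) :=
  (forall i, 0 < v i 0 /\ 0 < s i 0) /\
  \sum_i (v i 0 * s i 0 - mu_of v s) ^+ 2 <= (mu_of v s / 4) ^+ 2.

Lemma mu_ofE n (v s : 'cV[R]_(n + n)) :
  mu_of v s = (\sum_i v i 0 * s i 0) / (n + n)%:R.
Proof. by rewrite /mu_of /dotv [in X in _ / X](_ : (2 * n = n + n)%N) // addnn mul2n. Qed.

Lemma step n (lam : R) (H : 'M[R]_n) z (v s : 'cV[R]_(n + n)) z' v' s' :
  (0 < n)%N -> 0 <= lam -> H^T = H -> (forall x : 'cV[R]_n, 0 <= (x^T *m H *m x) 0 0) ->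
  nbhdPC v s -> pc_step lam H z v s z' v' s' ->
  nbhdPC v' s' /\
  mu_of v' s' <= (1 - ((2348 : R) / 10000) / Num.sqrt (2 * n)%:R) ^+ 2 * mu_of v s.
Proof.
move=> n0 l0 sH psd [pos nb] [dzp [dvp [dsp [dzc [dvc [dsc [Np [Nc [ez ev es]]]]]]]]].
have hm : (1 < n + n)%N by exact: (leq_add n0 n0).
have hm0 : (0 < n + n)%N by apply: ltn_trans hm.
have e2n : (2 * n)%:R = (n + n)%:R :> R by rewrite addnn mul2n.
set M : R := (n + n)%:R in e2n *.
have M2 : 2 <= M by rewrite /M (ler_nat R 2).
set dmu := dotv dvp dsp / (2 * n)%:R in Nc ez ev es.
set al := alpha_of (mu_of v s) _ in Nc ez ev es.
have hal : al = alpha_of (mu_of v s) (Num.sqrt (\sum_i (dvp i 0 * dsp i 0 - dmu) ^+ 2)).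
  rewrite /al /norm2 /dotv; congr (alpha_of _ (Num.sqrt _)).
  by apply: eq_bigr => i _; rewrite !mxE mulr1 expr2.
have hdmu : dmu = (\sum_i dvp i 0 * dsp i 0) / M by rewrite /dmu e2n.
have newp i : s i 0 * dvp i 0 + v i 0 * dsp i 0 = 0 - v i 0 * s i 0.
  by rewrite (newton_comp Np) mul0r.
have [posh nbh muh_le [al0 al2] alM] :=
  predictor (v := fun i => v i 0) (s := fun i => s i 0) (dv := fun i => dvp i 0)
    (ds := fun i => dsp i 0) hm pos (mu_ofE v s) nb newp (newton_mono l0 sH psd Np) hdmu hal.
set vh := v + al *: dvp in Nc ez ev es.
set sh := s + al *: dsp in Nc ez ev es.
have muhE : mu_of vh sh =
    (\sum_i (v i 0 + al * dvp i 0) * (s i 0 + al * dsp i 0)) / M.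
  by rewrite mu_ofE; congr (_ / _); apply: eq_bigr => i _; rewrite !mxE.
have posh' i : 0 < vh i 0 /\ 0 < sh i 0 by rewrite !mxE; apply: posh.
have nbh' : \sum_i (vh i 0 * sh i 0 - mu_of vh sh) ^+ 2 <= (mu_of vh sh / 2) ^+ 2.
  rewrite muhE; apply: le_trans nbh; rewrite le_eqVlt; apply/orP; left; apply/eqP.
  by apply: eq_bigr => i _; rewrite !mxE.
have [posn nbn mun_le] :=
  corrector (v := fun i => vh i 0) (s := fun i => sh i 0) (dv := fun i => dvc i 0)
    (ds := fun i => dsc i 0) hm0 posh' (mu_ofE vh sh) nbh' (newton_comp Nc)
    (newton_mono l0 sH psd Nc).
have munE : mu_of v' s' =
    (\sum_i (vh i 0 + dvc i 0) * (sh i 0 + dsc i 0)) / M.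
  by rewrite ev es mu_ofE; congr (_ / _); apply: eq_bigr => i _; rewrite !mxE.
split.
  split; first by move=> i; move: (posn i); rewrite ev es !mxE.
  rewrite munE; apply: le_trans nbn; rewrite le_eqVlt; apply/orP; left; apply/eqP.
  by apply: eq_bigr => i _; rewrite ev es !mxE /=.
have mu0 : 0 < mu_of v s.
  rewrite mu_ofE; apply: divr_gt0; last by rewrite ltr0n.
  by apply: sum_pos => // i; case: (pos i) => ? ?; apply: mulr_gt0.
rewrite munE e2n.
apply: le_trans mun_le _.
apply: le_trans (final_arith M2 al0 al2 alM mu0).
apply: ler_wpM2l; last by rewrite muhE.
apply: addr_ge0 => //; apply: divr_ge0 => //; lra.
Qed.

Lemma init_nbhdPC n (h : 'cV[R]_n) : (0 < n)%N -> h != 0 ->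
  let lam := 1 / (4 * Num.sqrt 2 * norm2 h) in
  nbhdPC (col_mx (ones R n - lam *: h) (ones R n + lam *: h)) (col_mx (ones R n) (ones R n))
  /\ mu_of (col_mx (ones R n - lam *: h) (ones R n + lam *: h)) (col_mx (ones R n) (ones R n)) = 1.
Proof.
move=> n0 hn0 lam.
set v0 := col_mx _ _; set s0 := col_mx _ _.
have sE i : s0 i 0 = 1.
  by rewrite /s0; case: (split_ordP i) => j ->; rewrite ?col_mxEu ?col_mxEd mxE.
have dh0 : 0 < dotv h h.
  have ge : 0 <= dotv h h by apply: sumr_ge0 => i _; rewrite -expr2; apply: sqr_ge0.
  rewrite lt_neqAle ge andbT; apply/negP => /eqP e.
  move/negP: hn0; apply; apply/eqP/matrixP => i j; rewrite (ord1 j) mxE.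
  apply: (@zero_of_sumsq _ _ (fun k => h k 0)).
  by rewrite /dotv in e; under eq_bigr do rewrite expr2; rewrite -e.
have nh2 : norm2 h ^+ 2 = dotv h h by rewrite /norm2 sqr_sqrtr // ltW.
have nh0 : 0 < norm2 h by rewrite /norm2 sqrtr_gt0.
have s2 : Num.sqrt (2 : R) ^+ 2 = 2 by rewrite sqr_sqrtr.
have s20 : 0 < Num.sqrt (2 : R) by rewrite sqrtr_gt0.
have lam2 : lam ^+ 2 * dotv h h = 1 / 32.
  rewrite /lam -nh2 expr_div_n !exprMn s2; field.
  by rewrite gt_eqF.
have wl i : v0 (lshift n i) 0 * s0 (lshift n i) 0 = 1 - lam * h i 0.
  by rewrite sE /v0 col_mxEu !mxE mulr1.
have wr i : v0 (rshift n i) 0 * s0 (rshift n i) 0 = 1 + lam * h i 0.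
  by rewrite sE /v0 col_mxEd !mxE mulr1.
have mu1 : mu_of v0 s0 = 1.
  rewrite mu_ofE big_split_ord /=.
  under eq_bigr do rewrite wl.
  under [X in _ + X]eq_bigr do rewrite wr.
  rewrite -big_split /=.
  rewrite (eq_bigr (fun _ => 2)); last by move=> i _; ring.
  by rewrite sumr_const card_ord natrD -mulr_natr; field; rewrite -natrD pnatr_eq0 -lt0n addn_gt0 n0.
have sq : \sum_i (v0 i 0 * s0 i 0 - mu_of v0 s0) ^+ 2 = 1 / 16.
  rewrite mu1 big_split_ord /=.
  under eq_bigr do rewrite wl.
  under [X in _ + X]eq_bigr do rewrite wr.
  rewrite -big_split /=.
  rewrite (eq_bigr (fun i => (2 * lam ^+ 2) * (h i 0 * h i 0))); last by move=> i _; ring.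
  rewrite -mulr_sumr -/(dotv h h) -mulrA lam2; by field.
split; last exact: mu1.
split; last by rewrite sq mu1; lra.
move=> i; rewrite sE; split; last lra.
have := @term_le_sum _ _ (fun j => (v0 j 0 * s0 j 0 - mu_of v0 s0) ^+ 2) i (fun j => sqr_ge0 _).
rewrite sq mu1 sE mulr1 /= => hi; nra.
Qed.

End Vec.

Lemma c_bounds (R : realType) (N : R) : 2 <= N ->
  0 < 1 - 2348 / 10000 / Num.sqrt N /\ 1 - 2348 / 10000 / Num.sqrt N < 1.
Proof.
move=> N2.
have qq : Num.sqrt N ^+ 2 = N by rewrite sqr_sqrtr //; lra.
have q75 : 7/5 <= Num.sqrt N by apply: sq_le; [exact: sqrtr_ge0 | rewrite qq; lra].
have a0 : 0 < 2348 / 10000 / Num.sqrt N by apply: divr_gt0; lra.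
have a1 : 2348 / 10000 / Num.sqrt N < 1 by rewrite ltr_pdivrMr; lra.
split; lra.
Qed.

Lemma log_part (R : realType) (N eps c mu : R) (k : nat) : 0 < eps -> 0 < N -> 0 < c -> c < 1 ->
  (Num.ceil (ln (N / eps) / (- 2 * ln c)) <= k%:Z)%R -> mu <= (c ^+ 2) ^+ k -> N * mu <= eps.
Proof.
move=> eps0 N0 c0 c1 hk muk.
have lc : ln c < 0 by apply: ln_lt0; rewrite c0 c1.
have A0 : 0 < - 2 * ln c by lra.
have hX : ln (N / eps) / (- 2 * ln c) <= k%:R.
  apply: le_trans (ceil_ge _) _.
  have : ((Num.ceil (ln (N / eps) / (- 2 * ln c)))%:~R : R) <= (k%:Z)%:~R by rewrite ler_int.
  by [].
have L : ln (N / eps) <= k%:R * (- 2 * ln c) by rewrite -ler_pdivrMr.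
have c2 : 0 < c ^+ 2 by apply: exprn_gt0.
have pk : 0 < (c ^+ 2) ^+ k by apply: exprn_gt0.
have Ne : 0 < N / eps by apply: divr_gt0.
have lnk : ln ((c ^+ 2) ^+ k) = - (k%:R * (- 2 * ln c)).
  by rewrite lnXn // lnXn // -mulrnA -[ln c *+ _]mulr_natl natrM; ring.
have lne : ln (eps / N) = - ln (N / eps).
  by rewrite -invf_div lnV // posrE.
have hk2 : (c ^+ 2) ^+ k <= eps / N.
  rewrite -ler_ln ?posrE //; last by apply: divr_gt0.
  by rewrite lnk lne lerN2.
apply: le_trans (ler_wpM2l (ltW N0) muk) _.
by rewrite -ler_pdivlMl // mulrC.
Qed.

Unset Implicit Arguments.

Theorem theorem1 (R : realType) (n : nat) (H : 'M[R]_n) (h : 'cV[R]_n)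
  (eps : R)
  (z : nat -> 'cV[R]_n) (v s : nat -> 'cV[R]_(n + n)) :
  (0 < n)%N ->
  H^T = H ->
  (forall x : 'cV[R]_n, 0 <= (x^T *m H *m x) 0 0) ->
  h != 0 ->
  0 < eps ->
  let lam := 1 / (4 * Num.sqrt 2 * norm2 h) in
  z 0%N = 0 ->
  v 0%N = col_mx (ones R n - lam *: h) (ones R n + lam *: h) ->
  s 0%N = col_mx (ones R n) (ones R n) ->
  (forall k, pc_step lam H (z k) (v k) (s k) (z k.+1) (v k.+1) (s k.+1)) ->
  let c := 1 - ((2348 : R) / 10000) / Num.sqrt (2 * n)%:R in
  (forall k, mu_of (v k.+1) (s k.+1) <= c ^+ 2 * mu_of (v k) (s k)) /\
  (forall k : nat,
     (Num.ceil (ln ((2 * n)%:R / eps) / (- 2 * ln c)) <= k%:Z)%R ->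
     dotv (v k) (s k) <= eps).
Proof.
move=> n0 sH psd hn0 eps0 lam ez0 ev0 es0 hstep c.
have l0 : 0 <= lam.
  rewrite /lam; apply: divr_ge0 => //; apply: mulr_ge0; last exact: sqrtr_ge0.
  by apply: mulr_ge0; [lra | exact: sqrtr_ge0].
have [nb0 mu01] := init_nbhdPC n0 hn0.
rewrite -/lam -ev0 -es0 in nb0 mu01.
have inv k : nbhdPC (v k) (s k).
  elim: k => [|k IH] //.
  by case: (step n0 l0 sH psd IH (hstep k)).
have part1 k : mu_of (v k.+1) (s k.+1) <= c ^+ 2 * mu_of (v k) (s k).
  by case: (step n0 l0 sH psd (inv k) (hstep k)).
split => // k hk.
have muk : mu_of (v k) (s k) <= (c ^+ 2) ^+ k.
  elim: k {hk} => [|k IH]; first by rewrite mu01 expr0.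
  apply: le_trans (part1 k) _; rewrite [X in _ <= X]exprS; apply: ler_wpM2l => //; exact: sqr_ge0.
have N0 : 0 < (2 * n)%:R :> R by rewrite ltr0n muln_gt0 n0.
have dE : dotv (v k) (s k) = (2 * n)%:R * mu_of (v k) (s k).
  by rewrite /mu_of mulrC mulfVK // gt_eqF.
have q2 : 2 <= (2 * n)%:R :> R by rewrite (ler_nat R 2) leq_pmulr.
have [c0 c1] := c_bounds q2.
by rewrite dE; apply: log_part hk muk.
Qed.
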